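(* Let $n_\theta\in\mathbb{N}$ and let $\kappa:\mathbb{R}^{n_\theta}\times\mathbb{R}^{n_\theta}\to\mathbb{R}$ be a kernel (as in the context) with reproducing kernel Hilbert space $\mathcal{H}$. Let a dataset $\mathcal{D}_k=\{(\widetilde\theta_i,\widetilde y_i)\mid i=1,\dots,N_k\}\subset\mathbb{R}^{n_\theta}\times\mathbb{R}$, constants $\bar\delta\ge 0$ and $\Gamma>0$, and a function $f\in\mathcal{H}$ be given such that $\lVert f\rVert\le\Gamma$ and $|f(\widetilde\theta_i)-\widetilde y_i|\le\bar\delta$ for all $i=1,\dots,N_k$. Let $m_k$ be defined by $$m_k=\arg\min_{m\in\mathcal{H}}\lVert m\rVert^2\quad\text{s.t. } |m(\widetilde\theta_i)-\widetilde y_i|\le\bar\delta\ \ \forall i\in\{1,\dots,N_k\}.$$ Define the feasible set $\mathcal{F}:=\{g\in\mathcal{H}: \lVert g\rVert^2\le\Gamma^2,\ |g(\widetilde\theta_i)-\widetilde y_i|\le\bar\delta\ \forall i=1,\dots,N_k\}$ (so $f\in\mathcal{F}$). Fix $\theta\in\mathbb{R}^{n_\theta}$. (i) With $N=N_k+n_\theta$, the infimum $\inf_{g\in\mathcal{F}}\nabla g(\theta)^\top\nabla m_k(\theta)$ is attained and equals the optimal value of the second-order cone program $$\underline b(\theta):=\min_{\beta\in\mathbb{R}^N}\ \begin{bmatrix}0_{1\times N_k} & \nabla m_k(\theta)^\top\end{bmatrix}\mathfrak{K}(\theta)\beta\quad\text{s.t.}\quad \beta^\top\mathfrak{K}(\theta)\beta\le\Gamma^2,\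 \ |\xi_i^\top\mathfrak{K}(\theta)\beta-\widetilde y_i|\le\bar\delta\ \ \forall i\in\{1,\dots,N_k\},$$ where $\xi_i\in\mathbb{R}^N$ is the $i$-th standard basis vector. In particular $\nabla f(\theta)^\top\nabla m_k(\theta)\ge\underline b(\theta)$. (ii) For any $\mu>0$ and $c\in(0,1)$, let $\theta^+:=\theta-\mu\nabla m_k(\theta)$ and $N=N_k+2+n_\theta$. Then the supremum $\sup_{g\in\mathcal{F}}\big(g(\theta^+)-g(\theta)+c\mu\nabla g(\theta)^\top\nabla m_k(\theta)\big)$ is attained and equals the optimal value of the second-order cone program $$\bar b(\theta,\mu):=\max_{\beta\in\mathbb{R}^N}\ \begin{bmatrix}0_{1\times N_k} & -1 & 1 & c\mu\nabla m_k(\theta)^\top\end{bmatrix}\mathfrak{K}'(\theta,\theta^+)\beta\quad\text{s.t.}\quad\beta^\top\mathfrak{K}'(\theta,\theta^+)\beta\le\Gamma^2,\ \ |\xi_i^\top\mathfrak{K}'(\theta,\theta^+)\beta-\widetilde y_i|\le\bar\delta\ \ \forall i\in\{1,\dots,N_k\},$$ with $\xi_i\in\mathbb{R}^N$ the $i$-th standard basis vector. In particular $f(\theta^+)-f(\theta)+c\mu\nabla f(\theta)^\top\nabla m_k(\theta)\le\bar b(\theta,\mu)$.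
   Context: A kernel is a continuous, symmetric, twice continuously differentiable function $\kappa:\mathbb{R}^{n_\theta}\times\mathbb{R}^{n_\theta}\to\mathbb{R}$ that is positive definite in the sense that for every $N\in\mathbb{N}$ and every $\theta_1,\dots,\theta_N\in\mathbb{R}^{n_\theta}$ the matrix $[\kappa(\theta_i,\theta_j)]_{i,j}$ is positive semidefinite. $\mathcal{H}$ is its unique reproducing kernel Hilbert space (completion of finite sums $\sum_i\alpha_i\kappa(\cdot,\theta_i)$ under $\langle\kappa(\cdot,a),\kappa(\cdot,b)\rangle=\kappa(a,b)$), with norm $\lVert g\rVert=\sqrt{\langle g,g\rangle}$. Notation: $D^{(a,b)}\kappa(\theta,\theta')$ denotes the mixed partial derivative of $\kappa$ of multi-order $a$ in the first argument and $b$ in the second; $e_j\in\mathbb{R}^{n_\theta}$ is the $j$-th standard basis vector. With $\Omega=\{\widetilde\theta_1,\dots,\widetilde\theta_{N_k}\}$: $K_{\Omega\Omega}$ is the $N_k\times N_k$ matrix with entries $\kappa(\widetilde\theta_i,\widetilde\theta_j)$; $K_\Omega(z)=[\kappa(z,\widetilde\theta_1)\ \cdots\ \kappa(z,\widetilde\theta_{N_k})]$ (row vector); $\nabla K_\Omega(z)$ is the $n_\theta\times N_k$ matrix with $(j,i)$ entry $D^{(e_j,0)}\kappa(z,\widetilde\theta_i)$; $\nabla K(a,b):=[D^{(e_1,0)}\kappa(a,b)\ \cdots\ D^{(e_{n_\theta},0)}\kappa(a,b)]^\top\in\mathbb{R}^{n_\theta}$; $D^2_{1,2}\kappa(\theta,\theta)$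 is the $n_\theta\times n_\theta$ matrix with $(i,j)$ entry $D^{(e_i,e_j)}\kappa(\theta,\theta)$. $$\mathfrak{K}(\theta):=\begin{bmatrix}K_{\Omega\Omega} & \nabla K_\Omega(\theta)^\top\\ \nabla K_\Omega(\theta) & D^2_{1,2}\kappa(\theta,\theta)\end{bmatrix},$$ $$\mathfrak{K}'(\theta,\theta^+):=\begin{bmatrix}K_{\Omega\Omega} & K_\Omega(\theta)^\top & K_\Omega(\theta^+)^\top & \nabla K_\Omega(\theta)^\top\\ K_\Omega(\theta) & \kappa(\theta,\theta) & \kappa(\theta,\theta^+) & \nabla K(\theta,\theta)^\top\\ K_\Omega(\theta^+) & \kappa(\theta^+,\theta) & \kappa(\theta^+,\theta^+) & \nabla K(\theta,\theta^+)^\top\\ \nabla K_\Omega(\theta) & \nabla K(\theta,\theta) & \nabla K(\theta,\theta^+) & D^2_{1,2}\kappa(\theta,\theta)\end{bmatrix}.$$ If points among $\widetilde\theta_1,\dots,\widetilde\theta_{N_k},\theta,\theta^+$ coincide, duplicated rows/columns may be removed; this does not change the optimal values. *)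

(* Defs.v *)
From HB Require Import structures.
From mathcomp Require Import all_boot all_order all_algebra.
From mathcomp Require Import all_classical all_reals all_analysis.
Set Implicit Arguments. Unset Strict Implicit. Unset Printing Implicit Defensive.
Import Order.TTheory GRing.Theory Num.Theory.
Import numFieldNormedType.Exports.
Local Open Scope ring_scope.

Definition evec {R : realType} {n : nat} (j : 'I_n) : 'rV[R]_n := delta_mx 0 j.

Definition C2_fun {R : realType} {m : nat} (F : 'rV[R]_m -> R) : Prop :=
  continuous F /\
  (forall i p, derivable F p (evec i)) /\
  (forall i, continuous (fun p => derive F p (evec i))) /\
  (forall i j p, derivable (fun q => derive F q (evec i)) p (evec j)) /\
  (forall i j, continuous (fun p => derive (fun q => derive F q (evec i)) p (evec j))).

Definition gram {R : realType} {n N : nat} (kappa : 'rV[R]_n -> 'rV[R]_n -> R)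
  (t : 'I_N -> 'rV[R]_n) : 'M[R]_N := \matrix_(i, j) kappa (t i) (t j).

Definition is_kernel {R : realType} {n : nat} (kappa : 'rV[R]_n -> 'rV[R]_n -> R) : Prop :=
  C2_fun (fun p : 'rV[R]_(n + n) => kappa (lsubmx p) (rsubmx p)) /\
  (forall a b, kappa a b = kappa b a) /\
  (forall (N : nat) (t : 'I_N -> 'rV[R]_n) (a : 'cV[R]_N),
      0 <= (a^T *m gram kappa t *m a) 0 0).

Definition inner_product {R : realType} {V : lmodType R} (ip : V -> V -> R) : Prop :=
  (forall u v, ip u v = ip v u) /\
  (forall (a : R) u v w, ip (a *: u + v) w = a * ip u w + ip v w) /\
  (forall u, 0 <= ip u u) /\
  (forall u, ip u u = 0 -> u = 0).

Definition ipnorm {R : realType} {V : lmodType R} (ip : V -> V -> R) (u : V) : R :=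
  Num.sqrt (ip u u).

Definition ip_complete {R : realType} {V : lmodType R} (ip : V -> V -> R) : Prop :=
  forall u : nat -> V,
    (forall e : R, 0 < e -> exists N : nat, forall p q : nat, (N <= p)%N -> (N <= q)%N ->
        ipnorm ip (u p - u q) < e) ->
    exists l : V, forall e : R, 0 < e -> exists N : nat, forall p : nat, (N <= p)%N ->
        ipnorm ip (u p - l) < e.

(* (V, ip) together with the feature map k (k t = kappa(., t)) is the RKHS of kappa:
   a Hilbert space in which the finite sums sum_i a_i kappa(., t_i) are dense, with
   <kappa(.,a), kappa(.,b)> = kappa(a,b).  An element g is the function t |-> <g, k t>. *)
Definition is_RKHS {R : realType} {n : nat} (kappa : 'rV[R]_n -> 'rV[R]_n -> R)
  {V : lmodType R} (ip : V -> V -> R) (k : 'rV[R]_n -> V) : Prop :=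
  inner_product ip /\ ip_complete ip /\
  (forall a b, ip (k a) (k b) = kappa a b) /\
  (forall (g : V) (e : R), 0 < e -> exists (N : nat) (a : 'I_N -> R) (t : 'I_N -> 'rV[R]_n),
      ipnorm ip (g - \sum_(i < N) a i *: k (t i)) < e).

Definition ev {R : realType} {n : nat} {V : lmodType R} (ip : V -> V -> R)
  (k : 'rV[R]_n -> V) (g : V) : 'rV[R]_n -> R := fun t => ip g (k t).

Definition grad {R : realType} {n : nat} (F : 'rV[R]_n -> R) (x : 'rV[R]_n) : 'rV[R]_n :=
  \row_j derive F x (evec j).

Definition d1 {R : realType} {n : nat} (kappa : 'rV[R]_n -> 'rV[R]_n -> R) (j : 'I_n)
  (a b : 'rV[R]_n) : R := derive (fun x => kappa x b) a (evec j).

Definition d12 {R : realType} {n : nat} (kappa : 'rV[R]_n -> 'rV[R]_n -> R) (i j : 'I_n)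
  (a b : 'rV[R]_n) : R :=
  derive (fun y => derive (fun x => kappa x y) a (evec i)) b (evec j).

Definition interp_ok {R : realType} {n Nk : nat} {V : lmodType R} (ip : V -> V -> R)
  (k : 'rV[R]_n -> V) (th : 'I_Nk -> 'rV[R]_n) (y : 'I_Nk -> R) (delta : R) (g : V) : Prop :=
  forall i, `|ev ip k g (th i) - y i| <= delta.

Definition feasible {R : realType} {n Nk : nat} {V : lmodType R} (ip : V -> V -> R)
  (k : 'rV[R]_n -> V) (th : 'I_Nk -> 'rV[R]_n) (y : 'I_Nk -> R) (delta Gamma : R) (g : V)
  : Prop :=
  ip g g <= Gamma ^+ 2 /\ interp_ok ip k th y delta g.

Definition is_min_norm_interp {R : realType} {n Nk : nat} {V : lmodType R} (ip : V -> V -> R)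
  (k : 'rV[R]_n -> V) (th : 'I_Nk -> 'rV[R]_n) (y : 'I_Nk -> R) (delta : R) (m : V) : Prop :=
  interp_ok ip k th y delta m /\
  (forall g, interp_ok ip k th y delta g -> ip m m <= ip g g).

Definition KO {R : realType} {n Nk : nat} (kappa : 'rV[R]_n -> 'rV[R]_n -> R)
  (th : 'I_Nk -> 'rV[R]_n) (z : 'rV[R]_n) : 'rV[R]_Nk := \row_i kappa z (th i).

Definition gradKO {R : realType} {n Nk : nat} (kappa : 'rV[R]_n -> 'rV[R]_n -> R)
  (th : 'I_Nk -> 'rV[R]_n) (z : 'rV[R]_n) : 'M[R]_(n, Nk) :=
  \matrix_(j, i) d1 kappa j z (th i).

Definition gradK {R : realType} {n : nat} (kappa : 'rV[R]_n -> 'rV[R]_n -> R)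
  (a b : 'rV[R]_n) : 'cV[R]_n := \col_j d1 kappa j a b.

Definition D2K {R : realType} {n : nat} (kappa : 'rV[R]_n -> 'rV[R]_n -> R)
  (z : 'rV[R]_n) : 'M[R]_n := \matrix_(i, j) d12 kappa i j z z.

Definition frakK {R : realType} {n Nk : nat} (kappa : 'rV[R]_n -> 'rV[R]_n -> R)
  (th : 'I_Nk -> 'rV[R]_n) (z : 'rV[R]_n) : 'M[R]_(Nk + n) :=
  block_mx (gram kappa th) (gradKO kappa th z)^T (gradKO kappa th z) (D2K kappa z).

Definition frakK' {R : realType} {n Nk : nat} (kappa : 'rV[R]_n -> 'rV[R]_n -> R)
  (th : 'I_Nk -> 'rV[R]_n) (z zp : 'rV[R]_n) : 'M[R]_(Nk + 2 + n) :=
  let A : 'M[R]_(Nk + 2) :=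
    block_mx (gram kappa th)
             (row_mx (KO kappa th z)^T (KO kappa th zp)^T)
             (col_mx (KO kappa th z) (KO kappa th zp))
             (\matrix_(i < 2, j < 2)
                 kappa (if val i == 0%N then z else zp) (if val j == 0%N then z else zp)) in
  let C : 'M[R]_(n, Nk + 2) :=
    row_mx (gradKO kappa th z) (row_mx (gradK kappa z z) (gradK kappa z zp)) in
  block_mx A C^T C (D2K kappa z).

(* Main.v *)
Require Import Defs.
From HB Require Import structures.
From mathcomp Require Import all_boot all_order all_algebra.
From mathcomp Require Import all_classical all_reals all_analysis.
From mathcomp Require Import ring lra.
Set Implicit Arguments. Unset Strict Implicit. Unset Printing Implicit Defensive.
Import Order.TTheory GRing.Theory Num.Theory.
Import numFieldNormedType.Exports.
Local Open Scope ring_scope.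

Lemma cont_sum (R : realType) r (I : Type) (s : seq I) (F : I -> 'rV[R]_r -> R) :
  (forall i, continuous (F i)) -> continuous (fun c => \sum_(i <- s) F i c).
Proof.
move=> hF; elim: s => [|i s IH].
  have -> : (fun c : 'rV[R]_r => \sum_(i <- [::]) F i c) = (fun=> 0).
    by apply: funext => c; rewrite big_nil.
  exact: cst_continuous.
have -> : (fun c => \sum_(j <- i :: s) F j c) = F i + (fun c => \sum_(j <- s) F j c).
  by apply: funext => c; rewrite big_cons.
by move=> c; apply: continuousD; [apply: hF | apply: IH].
Qed.

Lemma lin_cont (R : realType) r (b : 'I_r -> R) :
  continuous (fun c : 'rV[R]_r => \sum_i c 0 i * b i).
Proof.
apply: (@cont_sum R r _ (index_enum _) (fun i c => c 0 i * b i)) => i.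
have -> : (fun c : 'rV[R]_r => c 0 i * b i) = (fun c => c 0 i) \* (fun=> b i) by [].
move=> c; apply: continuousM; [exact: coord_continuous | exact: cst_continuous].
Qed.

Lemma sq_cont (R : realType) r :
  continuous (fun c : 'rV[R]_r => \sum_i c 0 i * c 0 i).
Proof.
apply: (@cont_sum R r _ (index_enum _) (fun i c => c 0 i * c 0 i)) => i.
have -> : (fun c : 'rV[R]_r => c 0 i * c 0 i) = (fun c => c 0 i) \* (fun c => c 0 i) by [].
move=> c; apply: continuousM; exact: coord_continuous.
Qed.

Section IP.
Variable R : realType.
Variable V : lmodType R.
Variable ip : V -> V -> R.
Hypothesis Hip : inner_product ip.

Lemma ipC u v : ip u v = ip v u.
Proof. by case: Hip => [h _]; apply: h. Qed.
Lemma ipDZl a u v w : ip (a *: u + v) w = a * ip u w + ip v w.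
Proof. by case: Hip => [_ [h _]]; apply: h. Qed.
Lemma ip_ge0 u : 0 <= ip u u.
Proof. by case: Hip => [_ [_ [h _]]]; apply: h. Qed.
Lemma ip_eq0 u : ip u u = 0 -> u = 0.
Proof. by case: Hip => [_ [_ [_ h]]]; apply: h. Qed.
Lemma ipDl u v w : ip (u + v) w = ip u w + ip v w.
Proof. by have := ipDZl 1 u v w; rewrite scale1r mul1r. Qed.
Lemma ip0l w : ip 0 w = 0.
Proof. have h := ipDl 0 0 w; rewrite addr0 in h; lra. Qed.
Lemma ipZl a u w : ip (a *: u) w = a * ip u w.
Proof. by rewrite -[a *: u]addr0 ipDZl ip0l addr0. Qed.
Lemma ipNl u w : ip (- u) w = - ip u w.
Proof. by rewrite -scaleN1r ipZl mulN1r. Qed.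
Lemma ipBl u v w : ip (u - v) w = ip u w - ip v w.
Proof. by rewrite ipDl ipNl. Qed.
Lemma ipDr u v w : ip w (u + v) = ip w u + ip w v.
Proof. by rewrite ipC ipDl ![ip _ w]ipC. Qed.
Lemma ipZr a u w : ip w (a *: u) = a * ip w u.
Proof. by rewrite ipC ipZl ipC. Qed.
Lemma ip0r w : ip w 0 = 0.
Proof. by rewrite ipC ip0l. Qed.
Lemma ipNr u w : ip w (- u) = - ip w u.
Proof. by rewrite ipC ipNl ipC. Qed.
Lemma ipBr u v w : ip w (u - v) = ip w u - ip w v.
Proof. by rewrite ipDr ipNr. Qed.
Lemma ip_suml I (r : seq I) (P : pred I) (F : I -> V) w :
  ip (\sum_(i <- r | P i) F i) w = \sum_(i <- r | P i) ip (F i) w.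
Proof.
elim/big_rec2: _ => [|i y1 y2 _ <-]; first by rewrite ip0l.
by rewrite ipDl.
Qed.
Lemma ip_sumr I (r : seq I) (P : pred I) (F : I -> V) w :
  ip w (\sum_(i <- r | P i) F i) = \sum_(i <- r | P i) ip w (F i).
Proof. by rewrite ipC ip_suml; apply: eq_bigr => i _; rewrite ipC. Qed.

Lemma ip_bound g x t : 2 * t * ip g x <= ip g g + t ^+ 2 * ip x x.
Proof.
have := ip_ge0 (g - t *: x).
rewrite ipBl !ipBr !ipZl !ipZr (ipC x g).
move=> h; rewrite -subr_ge0; apply: le_trans h _; rewrite le_eqVlt; apply/orP; left.
apply/eqP; ring.
Qed.

Lemma ip_small g x e : 0 < e -> ip x x < e ^+ 2 / (4 * (ip g g + 1)) ->
  `|ip g x| < e.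
Proof.
move=> e0 hx.
have g0 := ip_ge0 g; have gp : 0 < ip g g + 1 by lra.
set t := 2 * (ip g g + 1) / e.
have t0 : 0 < t by rewrite /t divr_gt0 // mulr_gt0.
have key : forall z, ip x x = ip z z -> t * (2 * ip g z) < t * e.
  move=> z hz; rewrite mulrA (mulrC t); apply: (le_lt_trans (ip_bound g z t)).
  rewrite -hz.
  have h1 : t ^+ 2 * ip x x < t ^+ 2 * (e ^+ 2 / (4 * (ip g g + 1))).
    by rewrite ltr_pM2l // exprn_gt0.
  have e1 : t ^+ 2 * (e ^+ 2 / (4 * (ip g g + 1))) = ip g g + 1.
    rewrite /t; field; apply/andP; split; [lra| exact: lt0r_neq0].
  have -> : t * e = 2 * (ip g g + 1).
    rewrite /t; field; exact: lt0r_neq0.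
  lra.
have k1 := key x erefl.
have k2 := key (- x) ltac:(by rewrite ipNl ipNr opprK).
rewrite ltr_pM2l // in k1; rewrite ltr_pM2l // ipNr in k2.
rewrite ltr_norml; apply/andP; split; lra.
Qed.

Definition inspan N (u : 'I_N -> V) x := exists a : 'I_N -> R, x = \sum_i a i *: u i.
Definition orthonormal r (o : 'I_r -> V) := forall i j, ip (o i) (o j) = (i == j)%:R.

Lemma inspan0 N (u : 'I_N -> V) : inspan u 0.
Proof. by exists (fun=> 0); rewrite big1 // => i _; rewrite scale0r. Qed.
Lemma inspanD N (u : 'I_N -> V) x y : inspan u x -> inspan u y -> inspan u (x + y).
Proof.
move=> [a ->] [b ->]; exists (fun i => a i + b i).
by rewrite -big_split; apply: eq_bigr => i _; rewrite scalerDl.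
Qed.
Lemma inspanZ N (u : 'I_N -> V) c x : inspan u x -> inspan u (c *: x).
Proof.
move=> [a ->]; exists (fun i => c * a i).
by rewrite scaler_sumr; apply: eq_bigr => i _; rewrite scalerA.
Qed.
Lemma inspanN N (u : 'I_N -> V) x : inspan u x -> inspan u (- x).
Proof. by move=> h; rewrite -scaleN1r; apply: inspanZ. Qed.
Lemma inspanB N (u : 'I_N -> V) x y : inspan u x -> inspan u y -> inspan u (x - y).
Proof. by move=> hx hy; apply: inspanD => //; apply: inspanN. Qed.
Lemma inspan_sum N (u : 'I_N -> V) I (r : seq I) (P : pred I) (F : I -> V) :
  (forall i, P i -> inspan u (F i)) -> inspan u (\sum_(i <- r | P i) F i).
Proof.
move=> h; elim/big_rec: _ => [|i x Pi hx]; first exact: inspan0.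
by apply: inspanD => //; apply: h.
Qed.
Lemma inspan_gen N (u : 'I_N -> V) a : inspan u (u a).
Proof.
exists (fun i => (i == a)%:R); rewrite (bigD1 a) //= eqxx scale1r big1 ?addr0 //.
by move=> i /negbTE ->; rewrite scale0r.
Qed.
Lemma inspan_comb N M (u : 'I_N -> V) (v : 'I_M -> V) x :
  (forall j, inspan u (v j)) -> inspan v x -> inspan u x.
Proof.
move=> hv [a ->]; apply: inspan_sum => j _; exact: inspanZ.
Qed.

Lemma ortho_coord r (o : 'I_r -> V) (a : 'I_r -> R) j : orthonormal o ->
  ip (\sum_i a i *: o i) (o j) = a j.
Proof.
move=> ho; rewrite ip_suml (bigD1 j) //= ipZl ho eqxx mulr1 big1 ?addr0 //.
by move=> i /negbTE nij; rewrite ipZl ho nij mulr0.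
Qed.

Definition proj r (o : 'I_r -> V) x := \sum_i ip x (o i) *: o i.

Lemma proj_orth r (o : 'I_r -> V) x j : orthonormal o -> ip (x - proj o x) (o j) = 0.
Proof. by move=> ho; rewrite ipBl /proj ortho_coord // subrr. Qed.

Lemma proj_orth_span r (o : 'I_r -> V) x z : orthonormal o -> inspan o z ->
  ip (x - proj o x) z = 0.
Proof.
move=> ho [a ->]; rewrite ip_sumr big1 // => i _; by rewrite ipZr proj_orth // mulr0.
Qed.

Lemma proj_span r (o : 'I_r -> V) x : inspan o (proj o x).
Proof. by exists (fun i => ip x (o i)). Qed.

Lemma proj_id r (o : 'I_r -> V) x : orthonormal o -> inspan o x -> proj o x = x.
Proof. by move=> ho [a ->]; apply: eq_bigr => i _; rewrite ortho_coord. Qed.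

Lemma gram_schmidt N (u : 'I_N -> V) : exists r (o : 'I_r -> V),
  orthonormal o /\ (forall a, inspan o (u a)) /\ (forall i, inspan u (o i)).
Proof.
elim: N u => [|N IH] u.
  exists 0%N, (fun=> 0); split; [by case|split; by case].
have [r [ob [hon [uo ou]]]] := IH (fun a => u (lift ord_max a)).
set o := ob.
have ou' : forall i, inspan u (o i).
  move=> i; apply: inspan_comb (ou i) => j; exact: inspan_gen.
set z := u ord_max; set p := proj o z; set w := z - p.
have hzp : z = p + w by rewrite /w addrC subrK.
have wo : forall j, ip w (o j) = 0 by move=> j; apply: proj_orth.
have [w0|wn0] := eqVneq (ip w w) 0.
  have wz : w = 0 by apply: ip_eq0.
  exists r, o; split => //; split => // a.
  case: (unliftP ord_max a) => [j -> | ->]; first exact: uo.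
  by rewrite -/z hzp wz addr0; apply: proj_span.
have wpos : 0 < ip w w by rewrite lt_def wn0 ip_ge0.
set c := (Num.sqrt (ip w w))^-1.
have sq0 : 0 < Num.sqrt (ip w w) by rewrite sqrtr_gt0.
pose o' (i : 'I_r.+1) := if unlift ord_max i is Some j then o j else c *: w.
have o'l : forall j, o' (lift ord_max j) = o j by move=> j; rewrite /o' liftK.
have o'm : o' ord_max = c *: w by rewrite /o' unlift_none.
exists r.+1, o'; split; last split.
- move=> i j.
  case: (unliftP ord_max i) => [i1 -> | ->]; case: (unliftP ord_max j) => [j1 -> | ->].
  + by rewrite !o'l hon (inj_eq lift_inj).
  + rewrite o'l o'm ipZr ipC wo mulr0.
    by case: eqP => // /esym /eqP; rewrite (negbTE (neq_lift _ _)).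
  + rewrite o'l o'm ipZl wo mulr0.
    by case: eqP => // /eqP; rewrite (negbTE (neq_lift _ _)).
  + rewrite o'm ipZl ipZr eqxx /c mulrA -expr2 exprVn sqr_sqrtr ?ip_ge0 //.
    by rewrite mulVf.
- move=> a; case: (unliftP ord_max a) => [j -> | ->].
    apply: inspan_comb (uo j) => i; by have := inspan_gen o' (lift ord_max i); rewrite o'l.
  rewrite -/z hzp; apply: inspanD.
    apply: inspan_comb (proj_span o z) => i; by have := inspan_gen o' (lift ord_max i); rewrite o'l.
  have -> : w = Num.sqrt (ip w w) *: o' ord_max.
    by rewrite o'm scalerA /c mulfV ?scale1r // gt_eqF.
  apply: inspanZ; exact: inspan_gen.
- move=> i; case: (unliftP ord_max i) => [j -> | ->]; first by rewrite o'l.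
  rewrite o'm; apply: inspanZ; apply: inspanB; first exact: inspan_gen.
  apply: inspan_sum => j _; apply: inspanZ; exact: ou'.
Qed.


Definition feasA N M (u : 'I_N -> V) (idx : 'I_M -> 'I_N) (y : 'I_M -> R) (delta G : R) x :=
  ip x x <= G ^+ 2 /\ forall m, `|ip x (u (idx m)) - y m| <= delta.

Lemma opt_exists N M (u : 'I_N -> V) (idx : 'I_M -> 'I_N) (y : 'I_M -> R) (delta G : R)
  (w x1 : V) : inspan u w -> feasA u idx y delta G x1 ->
  exists x0, inspan u x0 /\ feasA u idx y delta G x0 /\
    forall x, feasA u idx y delta G x -> ip x0 w <= ip x w.
Proof.
move=> hw hx1.
have [r [ob [ho [uo ou]]]] := gram_schmidt u.
have wo : inspan ob w := inspan_comb uo hw.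
pose X (c : 'rV[R]_r) := \sum_i c 0 i *: ob i.
have Xip : forall z c, ip (X c) z = \sum_i c 0 i * ip (ob i) z.
  by move=> z c; rewrite ip_suml; apply: eq_bigr => i _; rewrite ipZl.
have XX : forall c, ip (X c) (X c) = \sum_i c 0 i ^+ 2.
  move=> c; rewrite Xip; apply: eq_bigr => i _.
  by rewrite ipC ortho_coord // expr2.
pose cof x := \row_i ip x (ob i) : 'rV[R]_r.
have Xcof : forall x, X (cof x) = proj ob x.
  by move=> x; apply: eq_bigr => i _; rewrite mxE.
have projip : forall x z, inspan ob z -> ip (proj ob x) z = ip x z.
  move=> x z hz; have := proj_orth_span x ho hz; rewrite ipBl => h; lra.
have projF : forall x, feasA u idx y delta G x -> feasA u idx y delta G (proj ob x).
  move=> x [hx1' hx2]; split.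
    apply: le_trans hx1'.
    have -> : ip x x = ip (proj ob x) (proj ob x) + ip (x - proj ob x) (x - proj ob x).
      have e1 := proj_orth_span x ho (proj_span ob x).
      have e2 : ip (proj ob x) (x - proj ob x) = 0 by rewrite ipC.
      have gen : forall p d : V, ip d p = 0 -> ip p d = 0 ->
          ip (p + d) (p + d) = ip p p + ip d d.
        by move=> p d h1 h2; rewrite ipDl !ipDr h1 h2; lra.
      by rewrite -gen // addrC subrK.
    by rewrite lerDl ip_ge0.
  by move=> m; rewrite projip //; apply: hx2.
pose Lm m (c : 'rV[R]_r) := \sum_i c 0 i * ip (ob i) (u (idx m)).
pose A : set 'rV[R]_r := fun c => \sum_i c 0 i ^+ 2 <= G ^+ 2 /\ forall m, `|Lm m c - y m| <= delta.
have AX : forall c, A c <-> feasA u idx y delta G (X c).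
  by move=> c; rewrite /A /feasA /= XX /Lm; split => -[h1 h2]; split => // m;
    have := h2 m; rewrite Xip.
have cofA : forall x, feasA u idx y delta G x -> A (cof x).
  by move=> x hx; apply/AX; rewrite Xcof; apply: projF.
pose L (c : 'rV[R]_r) := \sum_i c 0 i * ip (ob i) w.
have Lcont : continuous L by apply: lin_cont.
have Lmcont : forall m, continuous (Lm m) by move=> m; apply: lin_cont.
have ssqcont : continuous (fun c : 'rV[R]_r => \sum_i c 0 i ^+ 2).
  have -> : (fun c : 'rV[R]_r => \sum_i c 0 i ^+ 2) = (fun c => \sum_i c 0 i * c 0 i).
    by apply: funext => c; apply: eq_bigr => i _; rewrite expr2.
  exact: sq_cont.
have Acl : closed A.
  have -> : A = ((fun c : 'rV[R]_r => \sum_i c 0 i ^+ 2) @^-1` [set t | t <= G ^+ 2] `&`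
      \bigcap_(m in setT) ((Lm m) @^-1` [set t | t <= y m + delta] `&`
                             (Lm m) @^-1` [set t | y m - delta <= t]))%classic.
    apply: funext => c; apply: propext; split.
      move=> [h1 h2]; split => // m _; have := h2 m; rewrite ler_norml /=.
      move=> /andP [h3 h4]; split => /=; lra.
    move=> [h1 h2]; split => // m; have [/= h3 h4] := h2 m I.
    rewrite ler_norml; apply/andP; split; lra.
  apply: closedI; first by apply: preimage_closed => [c _|]; [apply: ssqcont|apply: closed_le].
  apply: closed_bigI => m _; apply: closedI;
    (apply: preimage_closed => [c _|]; [apply: Lmcont|]).
    exact: closed_le.
  exact: closed_ge.
have Abd : bounded_set A.
  exists `|G|; split; first exact: normr_real.
  move=> Mb hM c /= [hc _].
  rewrite [X in X <= _]/Num.norm /= mx_normrE; apply/bigmax_leP; split.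
    by apply: le_trans (ltW hM).
  move=> [i j] _ /=.
  have hj : c i j ^+ 2 <= G ^+ 2.
    apply: le_trans hc; rewrite (bigD1 j) //= (ord1 i) lerDl.
    by apply: sumr_ge0 => k _; rewrite sqr_ge0.
  have : `|c i j| <= `|G|.
    have a0 := normr_ge0 (c i j); have b0 := normr_ge0 G.
    rewrite -(real_normK (num_real (c i j))) -(real_normK (num_real G)) in hj. nra.
  move=> h; apply: le_trans h (ltW hM).
have Acp : compact A by apply: bounded_closed_compact.
have A0 : (A !=set0)%classic by exists (cof x1); apply: cofA.
have [c0 c0A c0min] := EVT_min_rV A0 Acp (continuous_subspaceT Lcont).
rewrite inE in c0A.
exists (X c0); split; last split.
- apply: inspan_sum => i _; apply: inspanZ; exact: ou.
- by apply/AX.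
- move=> x hx.
  have hxA := cofA x hx.
  have -> : ip x w = L (cof x).
    rewrite -(projip x w wo) -Xcof Xip; apply: eq_bigr => i _; by [].
  have -> : ip (X c0) w = L c0 by rewrite Xip.
  by apply: c0min; rewrite inE.
Qed.

End IP.

Local Open Scope classical_set_scope.
Lemma dir_derive (R : realType) m (F : 'rV[R]_m -> R) (p E : 'rV[R]_m) (s : R) :
  derivable F (s *: E + p) E ->
  is_derive s 1 (fun s => F (s *: E + p)) (derive F (s *: E + p) E).
Proof.
move=> hd.
have feq : (fun h : R => h^-1 *: (((fun s => F (s *: E + p)) \o shift s) (h *: 1)
                 - F (s *: E + p))) =
           (fun h : R => h^-1 *: ((F \o shift (s *: E + p)) (h *: E) - F (s *: E + p))).
  apply: funext => h /=; congr (_ *: (F _ - _)).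
  by rewrite [h *: 1]mulr1 scalerDl addrA.
have hd' : derivable (fun s0 : R => F (s0 *: E + p)) s 1 by rewrite /derivable feq.
apply: DeriveDef => //.
by rewrite /derive feq.
Qed.

Lemma mvt2 (R : realType) (f df : R -> R) (a b : R) :
  (forall x : R, is_derive x (1 : R) f (df x)) ->
  exists c, `|c - a| <= `|b - a| /\ f b - f a = df c * (b - a).
Proof.
move=> hf.
have fc : forall a b : R, {within `[a, b], continuous f}.
  move=> a' b'; apply: derivable_within_continuous => x _.
  by case: (hf x).
have hf' : forall a' b' (x : R), x \in `]a', b'[%R -> is_derive x (1:R) f (df x) by [].
case: (lerP a b) => hab.
  have [c hc e] := MVT_segment hab (hf' a b) (fc a b).
  exists c; split => //.
  rewrite in_itv /= in hc; case/andP: hc => h1 h2.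
  rewrite !ger0_norm ?subr_ge0 //; lra.
have [c hc e] := MVT_segment (ltW hab) (hf' b a) (fc b a).
exists c; split.
  rewrite in_itv /= in hc; case/andP: hc => h1 h2.
  rewrite !ler0_norm ?subr_le0 //; lra.
have : f a - f b = - (f b - f a) by rewrite opprB.
rewrite e => h; apply/eqP; rewrite -(eqr_opp); apply/eqP; rewrite -h.
by rewrite -mulrN opprB.
Qed.

Lemma evec_l (R : realType) n (j : 'I_n) :
  (evec (lshift n j) : 'rV[R]_(n + n)) = row_mx (evec j) 0.
Proof.
apply/matrixP => i l.
rewrite -[l]splitK; case: (fintype.split l) => l' /=; rewrite ?row_mxEl ?row_mxEr /evec !mxE.
  by rewrite (inj_eq (@lshift_inj _ _)).
by rewrite eq_rlshift andbF.
Qed.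

Lemma evec_r (R : realType) n (j : 'I_n) :
  (evec (rshift n j) : 'rV[R]_(n + n)) = row_mx 0 (evec j).
Proof.
apply/matrixP => i l.
rewrite -[l]splitK; case: (fintype.split l) => l' /=; rewrite ?row_mxEl ?row_mxEr /evec !mxE.
  by rewrite eq_lrshift andbF.
by rewrite (inj_eq (@rshift_inj _ _)).
Qed.

Section Deriv.
Variable R : realType.
Variable n : nat.
Variable kappa : 'rV[R]_n -> 'rV[R]_n -> R.
Hypothesis HC2 : C2_fun (fun p : 'rV[R]_(n + n) => kappa (lsubmx p) (rsubmx p)).
Variable theta : 'rV[R]_n.
Variable j : 'I_n.

Local Notation F := (fun p : 'rV[R]_(n + n) => kappa (lsubmx p) (rsubmx p)).
Local Notation e := (evec j : 'rV[R]_n).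
Local Notation E1 := (evec (lshift n j) : 'rV[R]_(n + n)).
Local Notation E2 := (evec (rshift n j) : 'rV[R]_(n + n)).
Local Notation P s t := (row_mx (s *: e + theta) (t *: e + theta)).
Local Notation G s t := (kappa (s *: e + theta) (t *: e + theta)).
Local Notation D1 := (fun p => derive F p E1).
Local Notation D12 := (fun p => derive D1 p E2).

Lemma hG1 (t s : R) : is_derive s (1:R) (fun s => G s t) (D1 (P s t)).
Proof.
have [_ [dF _]] := HC2.
have PE1 : forall s, P s t = s *: E1 + row_mx theta (t *: e + theta).
  by move=> s'; rewrite evec_l scale_row_mx add_row_mx scaler0 add0r.
have := dir_derive (p := row_mx theta (t *: e + theta)) (s := s) (E := E1) (dF _ _).
rewrite -PE1.
have -> : (fun s0 : R => F (s0 *: E1 + row_mx theta (t *: e + theta))) = (fun s => G s t).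
  by apply: funext => s'; rewrite -PE1 row_mxKl row_mxKr.
by [].
Qed.

Lemma hG2 (s t : R) : is_derive t (1:R) (fun t => D1 (P s t)) (D12 (P s t)).
Proof.
have [_ [_ [_ [dD1 _]]]] := HC2.
have PE2 : forall t, P s t = t *: E2 + row_mx (s *: e + theta) theta.
  by move=> t'; rewrite evec_r scale_row_mx add_row_mx scaler0 add0r.
have := dir_derive (p := row_mx (s *: e + theta) theta) (s := t) (E := E2) (dD1 _ _ _).
suff -> : (fun t => D1 (P s t)) = (fun s0 : R => D1 (s0 *: E2 + row_mx (s *: e + theta) theta)).
  by rewrite PE2.
by apply: funext => t'; rewrite PE2.
Qed.

Lemma second_diff h h' : exists s t, `|s| <= `|h| /\ `|t| <= `|h'| /\
   G h h' - G h 0 - G 0 h' + G 0 0 = h * h' * D12 (P s t).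
Proof.
pose phi s := G s h' - G s 0.
pose dphi s := D1 (P s h') - D1 (P s 0).
have hphi : forall s : R, is_derive s (1:R) phi (dphi s).
  by move=> s; apply: is_deriveB; apply: hG1.
have [s [hs es]] := mvt2 0 h hphi.
pose psi t := D1 (P s t).
have [t [ht et]] := mvt2 0 h' (hG2 s).
exists s, t; rewrite !subr0 in hs ht es et; split => //; split => //.
rewrite /phi /dphi in es.
have -> : G h h' - G h 0 - G 0 h' + G 0 0 = (G h h' - G h 0) - (G 0 h' - G 0 0) by ring.
rewrite es et; ring.
Qed.

Lemma norm_row2 (a b : R) : `|row_mx (a *: e) (b *: e)| <= `|a| + `|b|.
Proof.
rewrite [X in X <= _]/Num.norm /= mx_normrE; apply/bigmax_leP; split.
  by rewrite addr_ge0.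
move=> [i l] _ /=.
rewrite -[l]splitK; case: (fintype.split l) => l' /=; rewrite ?row_mxEl ?row_mxEr !mxE.
  case: (_ && _); rewrite /= ?mulr0 ?mulr1 ?normr0 ?addr_ge0 //.
  by rewrite lerDl.
case: (_ && _); rewrite /= ?mulr0 ?mulr1 ?normr0 ?addr_ge0 //.
by rewrite lerDr.
Qed.

Lemma D12_near eps : 0 < eps -> exists eta, 0 < eta /\ forall s t, `|s| < eta -> `|t| < eta ->
  `|D12 (P s t) - D12 (P 0 0)| < eps.
Proof.
move=> eps0.
have [_ [_ [_ [_ cont]]]] := HC2.
have hc := cont (lshift n j) (rshift n j) (P 0 0).
move/cvgrPdist_lt: hc => /(_ eps eps0) /nbhs_ballP [r r0 hr].
exists (r / 2); split; first by rewrite divr_gt0.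
move=> s t hs ht.
have eqd : P 0 0 - P s t = row_mx ((- s) *: e) ((- t) *: e).
  rewrite opp_row_mx add_row_mx !scale0r !add0r !scaleNr.
  by congr row_mx; rewrite opprD addrCA subrr addr0.
have hb : `|P 0 0 - P s t| < r.
  rewrite eqd; apply: le_lt_trans (norm_row2 _ _) _.
  by rewrite !normrN [ltRHS]splitr; apply: ltrD.
have hb' : ball (P 0 0) r (P s t) by rewrite -ball_normE /ball_ /=.
have := hr _ hb'.
move=> h; rewrite -normrN opprB; exact: h.
Qed.
End Deriv.

Lemma inv_small (R : realType) (eta : R) : 0 < eta ->
  exists M, forall m, (M <= m)%N -> (m.+1%:R : R)^-1 < eta.
Proof.
move=> eta0; exists (Num.Def.trunc (eta^-1)) => m hm.
have h1 := truncnS_gt (eta^-1).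
have h2 : ((Num.Def.trunc eta^-1).+1%:R : R) <= m.+1%:R by rewrite ler_nat ltnS.
rewrite invf_plt ?posrE //; try lra.
all: by rewrite ?ltr0n ?invr_gt0.
Qed.

Section Rep.
Variable R : realType.
Variable n : nat.
Variable kappa : 'rV[R]_n -> 'rV[R]_n -> R.
Hypothesis HC2 : C2_fun (fun p : 'rV[R]_(n + n) => kappa (lsubmx p) (rsubmx p)).
Variable theta : 'rV[R]_n.
Variable j : 'I_n.
Variable V : lmodType R.
Variable ip : V -> V -> R.
Variable k : 'rV[R]_n -> V.
Hypothesis Hip : inner_product ip.
Hypothesis hkk : forall a b, ip (k a) (k b) = kappa a b.
Hypothesis hcomp : ip_complete ip.

Local Notation e := (evec j : 'rV[R]_n).
Local Notation G s t := (kappa (s *: e + theta) (t *: e + theta)).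

Lemma S_near : exists L, forall eps, 0 < eps -> exists eta, 0 < eta /\
  forall h h', h != 0 -> h' != 0 -> `|h| < eta -> `|h'| < eta ->
  `|(G h h' - G h 0 - G 0 h' + G 0 0) / (h * h') - L| < eps.
Proof.
pose D := (fun p => derive (fun q => derive (fun p0 : 'rV[R]_(n + n) =>
   kappa (lsubmx p0) (rsubmx p0)) q (evec (lshift n j))) p (evec (rshift n j))).
pose P s t := row_mx (s *: e + theta) (t *: e + theta).
have hsd : forall h h', exists s t, `|s| <= `|h| /\ `|t| <= `|h'| /\
   G h h' - G h 0 - G 0 h' + G 0 0 = h * h' * D (P s t) := second_diff HC2 theta j.
have hnear : forall eps, 0 < eps -> exists eta, 0 < eta /\ forall s t, `|s| < eta -> `|t| < eta ->
  `|D (P s t) - D (P 0 0)| < eps := fun eps => @D12_near _ _ _ HC2 theta j eps.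
move: hsd hnear; move: (D (P 0 0)) => L; move: D P => D P hsd hnear.
exists L => eps eps0.
have [eta [eta0 heta]] := hnear eps eps0.
exists eta; split => // h h' hn hn' hh hh'.
have [s [t [hs [ht ->]]]] := hsd h h'.
rewrite mulrC mulrA mulVf ?mul1r ?mulf_neq0 //.
apply: heta; lra.
Qed.

Definition qv (h : R) : V := h^-1 *: (k (h *: e + theta) - k theta).

Lemma ipq h h' : ip (qv h) (qv h') = (G h h' - G h 0 - G 0 h' + G 0 0) / (h * h').
Proof.
rewrite !scale0r !add0r /qv (ipZl Hip) (ipZr Hip) (ipBl Hip) !(ipBr Hip) !hkk invfM.
ring.
Qed.

Lemma cauchy_q : forall eps, 0 < eps -> exists eta, 0 < eta /\
  forall h h', h != 0 -> h' != 0 -> `|h| < eta -> `|h'| < eta ->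
  ip (qv h - qv h') (qv h - qv h') < eps.
Proof.
have [L hL] := S_near.
move=> eps eps0.
have [eta [eta0 heta]] := hL (eps / 4) (divr_gt0 eps0 (ltac:(lra) : (0:R) < 4)).
exists eta; split => // h h' hn hn' hh hh'.
rewrite (ipBl Hip) !(ipBr Hip) (ipC Hip (qv h') (qv h)) !ipq.
have a1 := heta h h hn hn hh hh.
have a2 := heta h h' hn hn' hh hh'.
have a3 := heta h' h' hn' hn' hh' hh'.
move: a1 a2 a3.
move: (_ / (h * h)) (_ / (h * h')) (_ / (h' * h')) => x y z.
rewrite !ltr_norml => /andP[? ?] /andP[? ?] /andP[? ?]; lra.
Qed.


Lemma ipnorm_lt x c : 0 < c -> ip x x < c ^+ 2 -> ipnorm ip x < c.
Proof.
move=> c0 h; rewrite /ipnorm -(ger0_norm (ltW c0)) -sqrtr_sqr ltr_sqrt //.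
by rewrite exprn_gt0.
Qed.

Lemma ip_lt_norm x c : 0 < c -> ipnorm ip x < c -> ip x x < c ^+ 2.
Proof.
move=> c0 h.
have : Num.sqrt (ip x x) < Num.sqrt (c ^+ 2) by rewrite sqrtr_sqr ger0_norm // ltW.
by rewrite ltr_sqrt // exprn_gt0.
Qed.

Lemma para a b : ip (a + b) (a + b) <= 2 * ip a a + 2 * ip b b.
Proof.
have h := ip_ge0 Hip (a - b); rewrite (ipBl Hip) !(ipBr Hip) in h.
rewrite (ipDl Hip) !(ipDr Hip) (ipC Hip b a); rewrite (ipC Hip b a) in h; lra.
Qed.

Lemma rep_lim : exists v, forall g,
  (fun h : R => h^-1 *: ((ev ip k g \o shift theta) (h *: e) - ev ip k g theta)) @ 0^'
    --> ip g v.
Proof.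
pose us m := qv (m.+1%:R^-1).
have usn : forall m, (m.+1%:R : R)^-1 != 0.
  by move=> m; rewrite invr_neq0 // pnatr_eq0.
have usp : forall m, 0 < (m.+1%:R : R)^-1 by move=> m; rewrite invr_gt0 ltr0Sn.
have hC : forall eps, 0 < eps -> exists N, forall p q, (N <= p)%N -> (N <= q)%N ->
    ipnorm ip (us p - us q) < eps.
  move=> eps eps0; have [eta [eta0 h]] := cauchy_q (exprn_gt0 2 eps0).
  have [M hM] := inv_small eta0.
  exists M => p q hp hq; apply: ipnorm_lt => //; apply: h; rewrite ?usn //.
    by rewrite gtr0_norm //; exact: hM.
  by rewrite gtr0_norm //; exact: hM.
have [v hv] := hcomp hC.
exists v => g.
apply/cvgrPdist_lt => eps eps0.
pose tau := eps ^+ 2 / (4 * (ip g g + 1)).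
have g0 := ip_ge0 Hip g.
have tau0 : 0 < tau by rewrite divr_gt0 ?exprn_gt0 //; lra.
have [eta [eta0 heta]] := cauchy_q (divr_gt0 tau0 (ltac:(lra) : (0:R) < 4)).
have [M1 hM1] := inv_small eta0.
pose c := Num.sqrt (tau / 4).
have c0 : 0 < c by rewrite sqrtr_gt0 divr_gt0 //; lra.
have c2 : c ^+ 2 = tau / 4 by rewrite sqr_sqrtr // ltW // divr_gt0 //; lra.
have [M2 hM2] := hv c c0.
pose p := maxn M1 M2.
have e2 : ip (us p - v) (us p - v) < tau / 4.
  by rewrite -c2; apply: ip_lt_norm => //; apply: hM2; rewrite leq_maxr.
exists eta => //= h hh hne0.
rewrite /ev /=.
have -> : h^-1 *: (ip g (k (h *: e + theta)) - ip g (k theta)) = ip g (qv h).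
  by rewrite /qv (ipZr Hip) (ipBr Hip).
rewrite -(ipBr Hip); apply: (ip_small Hip) => //.
have e1 : ip (us p - qv h) (us p - qv h) < tau / 4.
  apply: heta; rewrite ?usn //.
    by rewrite gtr0_norm //; apply: hM1; rewrite leq_maxl.
  by move: hh; rewrite /ball_ /= distrC subr0.
have -> : v - qv h = (us p - qv h) + (- (us p - v)).
  by rewrite opprB [RHS]addrC [RHS]addrA subrK.
apply: le_lt_trans (para _ _) _.
rewrite (ipNl Hip) (ipNr Hip) opprK -/tau; lra.
Qed.


Lemma deriv_rep : exists v, forall g,
  derivable (ev ip k g) theta e /\ derive (ev ip k g) theta e = ip g v.
Proof.
have [v hv] := rep_lim; exists v => g; split.
  by apply/cvg_ex; exists (ip g v); exact: hv.
by rewrite /derive; apply: cvg_lim => //; exact: hv.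
Qed.

End Rep.

Local Close Scope classical_set_scope.
Lemma sL m n (i : 'I_m) : fintype.split (lshift n i) = inl i.
Proof. exact: (unsplitK (inl i)). Qed.
Lemma sR m n (i : 'I_n) : fintype.split (rshift m i) = inr i.
Proof. exact: (unsplitK (inr i)). Qed.

Lemma quad (R : realType) (V : lmodType R) (ip : V -> V -> R) (Hip : inner_product ip)
  N (K : 'M[R]_N) (u : 'I_N -> V) (cv : 'rV[R]_N) (b : 'cV[R]_N) :
  (forall a c, K a c = ip (u a) (u c)) ->
  (cv *m K *m b) 0 0 = ip (\sum_a cv 0 a *: u a) (\sum_c b c 0 *: u c).
Proof.
move=> hK; rewrite mxE (ip_sumr Hip); apply: eq_bigr => c _.
rewrite (ipZr Hip) mulrC mxE (ip_suml Hip); congr (_ * _); apply: eq_bigr => a _.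
by rewrite (ipZl Hip) hK.
Qed.

Lemma sum_delta (R : realType) (V : lmodType R) N (u : 'I_N -> V) (a0 : 'I_N) :
  \sum_a (delta_mx a0 0 : 'cV[R]_N)^T 0 a *: u a = u a0.
Proof.
rewrite (bigD1 a0) //= !mxE !eqxx /= scale1r big1 ?addr0 // => a /negbTE h.
by rewrite !mxE h /= scale0r.
Qed.

Lemma sqrt_le_sq (R : realType) (x G : R) : 0 < G -> 0 <= x -> Num.sqrt x <= G -> x <= G ^+ 2.
Proof.
move=> G0 x0 h.
have : Num.sqrt x <= Num.sqrt (G ^+ 2) by rewrite sqrtr_sqr ger0_norm // ltW.
by rewrite ler_sqrt // exprn_ge0 // ltW.
Qed.

Lemma final (R : realType) (V : lmodType R) (ip : V -> V -> R) (Hip : inner_product ip)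
  (n Nk N : nat) (k : 'rV[R]_n -> V) (th : 'I_Nk -> 'rV[R]_n) (u : 'I_N -> V)
  (idx : 'I_Nk -> 'I_N) (K : 'M[R]_N) (y : 'I_Nk -> R) (delta Gamma : R)
  (cvec : 'rV[R]_N) (w : V) (obj : V -> R) (f : V) :
  (forall a c, K a c = ip (u a) (u c)) ->
  (forall i, u (idx i) = k (th i)) ->
  (forall g, obj g = ip g w) ->
  \sum_a cvec 0 a *: u a = w ->
  feasible ip k th y delta Gamma f ->
  let sobj (b : 'cV[R]_N) : R := (cvec *m K *m b) 0 0 in
  let sfeas (b : 'cV[R]_N) : Prop :=
     (b^T *m K *m b) 0 0 <= Gamma ^+ 2 /\
     (forall i, `|((delta_mx (idx i) 0 : 'cV[R]_N)^T *m K *m b) 0 0 - y i| <= delta) in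
   exists g0 : V,
     feasible ip k th y delta Gamma g0 /\
     (forall g, feasible ip k th y delta Gamma g -> obj g0 <= obj g) /\
     (exists b, sfeas b /\ sobj b = obj g0) /\
     (forall b, sfeas b -> obj g0 <= sobj b) /\
     obj g0 <= obj f.
Proof.
move=> hK hu hobj hw hf sobj sfeas.
have feasE : forall g, feasible ip k th y delta Gamma g <-> feasA ip u idx y delta Gamma g.
  move=> g; rewrite /feasible /feasA /interp_ok /ev.
  by split => -[h1 h2]; split => // i; have := h2 i; rewrite hu.
pose gb (b : 'cV[R]_N) := \sum_c b c 0 *: u c.
have sobjE : forall b, sobj b = obj (gb b).
  by move=> b; rewrite /sobj (quad Hip _ _ hK) hw hobj (ipC Hip).
have sfeasE : forall b, sfeas b <-> feasA ip u idx y delta Gamma (gb b).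
  move=> b; rewrite /sfeas /feasA (quad Hip _ _ hK).
  have -> : \sum_a b^T 0 a *: u a = gb b by apply: eq_bigr => a _; rewrite mxE.
  split => -[h1 h2]; split => // i; have := h2 i; rewrite (quad Hip _ _ hK) sum_delta (ipC Hip) //.
have hwspan : inspan u w by exists (fun a => cvec 0 a).
have [x0 [[beta hbeta] [hx0 hmin]]] := opt_exists Hip hwspan (proj1 (feasE f) hf).
exists x0; split; first exact/feasE.
split; first by move=> g /feasE hg; rewrite !hobj; apply: hmin.
split.
  exists (\col_a beta a).
  have gbE : gb (\col_a beta a) = x0.
    by rewrite hbeta; apply: eq_bigr => a _; rewrite mxE.
  by rewrite sfeasE sobjE gbE.
split; first by move=> b /sfeasE hb; rewrite sobjE !hobj; apply: hmin.
by rewrite !hobj; apply: hmin; apply/feasE.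
Qed.

Lemma final_max (R : realType) (V : lmodType R) (ip : V -> V -> R) (Hip : inner_product ip)
  (n Nk N : nat) (k : 'rV[R]_n -> V) (th : 'I_Nk -> 'rV[R]_n) (u : 'I_N -> V)
  (idx : 'I_Nk -> 'I_N) (K : 'M[R]_N) (y : 'I_Nk -> R) (delta Gamma : R)
  (cvec : 'rV[R]_N) (w : V) (obj : V -> R) (f : V) :
  (forall a c, K a c = ip (u a) (u c)) ->
  (forall i, u (idx i) = k (th i)) ->
  (forall g, obj g = ip g w) ->
  \sum_a cvec 0 a *: u a = w ->
  feasible ip k th y delta Gamma f ->
  let sobj (b : 'cV[R]_N) : R := (cvec *m K *m b) 0 0 in
  let sfeas (b : 'cV[R]_N) : Prop :=
     (b^T *m K *m b) 0 0 <= Gamma ^+ 2 /\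
     (forall i, `|((delta_mx (idx i) 0 : 'cV[R]_N)^T *m K *m b) 0 0 - y i| <= delta) in
   exists g0 : V,
     feasible ip k th y delta Gamma g0 /\
     (forall g, feasible ip k th y delta Gamma g -> obj g <= obj g0) /\
     (exists b, sfeas b /\ sobj b = obj g0) /\
     (forall b, sfeas b -> sobj b <= obj g0) /\
     obj f <= obj g0.
Proof.
move=> hK hu hobj hw hf sobj sfeas.
have hobj' : forall g, - obj g = ip g (- w) by move=> g; rewrite hobj (ipNr Hip).
have hw' : \sum_a (- cvec) 0 a *: u a = - w.
  rewrite -hw -sumrN; apply: eq_bigr => a _; by rewrite mxE scaleNr.
have [g0 [h1 [h2 [[b [hb1 hb2]] [h4 h5]]]]] := final Hip hK hu hobj' hw' hf.
have sE : forall b, ((- cvec) *m K *m b) 0 0 = - sobj b.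
  by move=> b'; rewrite /sobj !mulNmx mxE.
exists g0; split => //; split.
  by move=> g hg; have := h2 g hg; rewrite lerN2.
split.
  by exists b; split => //; move: hb2; rewrite sE => /eqP; rewrite eqr_opp => /eqP.
split; last by move: h5; rewrite lerN2.
by move=> b' hb'; have := h4 b' hb'; rewrite sE lerN2.
Qed.

Lemma row_mx2 (R : realType) m (A B : 'M[R]_(m, 1)) i (t : 'I_2) :
  (row_mx A B : 'M[R]_(m, 1 + 1)) i t = if val t == 0%N then A i 0 else B i 0.
Proof.
rewrite /row_mx mxE; case: splitP => t'; rewrite (ord1 t') /= => -> //.
Qed.

Lemma col_mx2 (R : realType) m (A B : 'M[R]_(1, m)) (t : 'I_2) i :
  (col_mx A B : 'M[R]_(1 + 1, m)) t i = if val t == 0%N then A 0 i else B 0 i.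
Proof.
rewrite /col_mx mxE; case: splitP => t'; rewrite (ord1 t') /= => -> //.
Qed.
Theorem theorem1 (R : realType) (n Nk : nat)
  (kappa : 'rV[R]_n -> 'rV[R]_n -> R)
  (V : lmodType R) (ip : V -> V -> R) (k : 'rV[R]_n -> V)
  (th : 'I_Nk -> 'rV[R]_n) (y : 'I_Nk -> R) (delta Gamma : R) (f mk : V)
  (theta : 'rV[R]_n) :
  is_kernel kappa ->
  is_RKHS kappa ip k ->
  0 <= delta -> 0 < Gamma ->
  ipnorm ip f <= Gamma ->
  interp_ok ip k th y delta f ->
  is_min_norm_interp ip k th y delta mk ->
  let gm : 'rV[R]_n := grad (ev ip k mk) theta in
  (* part (i) *)
  (let obj (g : V) : R := (grad (ev ip k g) theta *m gm^T) 0 0 in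
   let K : 'M[R]_(Nk + n) := frakK kappa th theta in
   let cvec : 'rV[R]_(Nk + n) := row_mx (0 : 'rV[R]_Nk) gm in
   let sobj (b : 'cV[R]_(Nk + n)) : R := (cvec *m K *m b) 0 0 in
   let sfeas (b : 'cV[R]_(Nk + n)) : Prop :=
     (b^T *m K *m b) 0 0 <= Gamma ^+ 2 /\
     (forall i : 'I_Nk,
        `|((delta_mx (lshift n i) 0 : 'cV[R]_(Nk + n))^T *m K *m b) 0 0 - y i| <= delta) in
   exists g0 : V,
     feasible ip k th y delta Gamma g0 /\
     (forall g, feasible ip k th y delta Gamma g -> obj g0 <= obj g) /\
     (exists b, sfeas b /\ sobj b = obj g0) /\
     (forall b, sfeas b -> obj g0 <= sobj b) /\
     obj g0 <= obj f) /\
  (* part (ii) *)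
  (forall mu c : R, 0 < mu -> 0 < c < 1 ->
   let thetap : 'rV[R]_n := theta - mu *: gm in
   let obj (g : V) : R :=
     ev ip k g thetap - ev ip k g theta
     + c * mu * (grad (ev ip k g) theta *m gm^T) 0 0 in
   let K : 'M[R]_(Nk + 2 + n) := frakK' kappa th theta thetap in
   let cvec : 'rV[R]_(Nk + 2 + n) :=
     row_mx (row_mx (0 : 'rV[R]_Nk) (\row_(j < 2) if val j == 0%N then -1 else 1))
            ((c * mu) *: gm) in
   let sobj (b : 'cV[R]_(Nk + 2 + n)) : R := (cvec *m K *m b) 0 0 in
   let sfeas (b : 'cV[R]_(Nk + 2 + n)) : Prop :=
     (b^T *m K *m b) 0 0 <= Gamma ^+ 2 /\
     (forall i : 'I_Nk,
        `|((delta_mx (lshift n (lshift 2 i)) 0 : 'cV[R]_(Nk + 2 + n))^T *m K *m b) 0 0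
          - y i| <= delta) in
   exists g0 : V,
     feasible ip k th y delta Gamma g0 /\
     (forall g, feasible ip k th y delta Gamma g -> obj g <= obj g0) /\
     (exists b, sfeas b /\ sobj b = obj g0) /\
     (forall b, sfeas b -> sobj b <= obj g0) /\
     obj f <= obj g0).
Proof.
move=> Hk HR d0 G0 hf hfi hmk gm.
have [HC2 [ksym _]] := Hk.
have [Hip [hcomp [hkk _]]] := HR.
have hrep := fun j => deriv_rep HC2 theta j Hip hkk hcomp.
case: (choice hrep) => vf hvf.
have gradE : forall g, grad (ev ip k g) theta = \row_j ip g (vf j).
  by move=> g; apply/rowP => j; rewrite !mxE; case: (hvf j g).
have d1E : forall j t, d1 kappa j theta t = ip (k t) (vf j).
  move=> j t; rewrite /d1.
  have -> : (fun x => kappa x t) = ev ip k (k t).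
    by apply: funext => x; rewrite /ev hkk ksym.
  by case: (hvf j (k t)).
have d12E : forall i j, d12 kappa i j theta theta = ip (vf i) (vf j).
  move=> i j; rewrite /d12.
  have -> : (fun yy => derive (fun x => kappa x yy) theta (evec i)) = ev ip k (vf i).
    apply: funext => yy; have := d1E i yy; rewrite /d1 => ->.
    by rewrite /ev (ipC Hip).
  by case: (hvf j (vf i)).
pose w := \sum_j gm 0 j *: vf j.
have objE : forall g, (grad (ev ip k g) theta *m gm^T) 0 0 = ip g w.
  move=> g; rewrite gradE mxE /w (ip_sumr Hip); apply: eq_bigr => j _.
  by rewrite !mxE (ipZr Hip) mulrC.
have hf' : feasible ip k th y delta Gamma f.
  split => //; apply: sqrt_le_sq => //; exact: ip_ge0 Hip f.
split.
  move=> obj K cvec sobj sfeas.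
  pose u1 (a : 'I_(Nk + n)) := match fintype.split a with
    | inl i => k (th i) | inr j => vf j end.
  have K1 : forall a c, K a c = ip (u1 a) (u1 c).
    move=> a c; rewrite /K /frakK -[a]splitK -[c]splitK.
    case: (fintype.split a) => a'; case: (fintype.split c) => c' /=;
      rewrite /u1 ?sL ?sR ?block_mxEul ?block_mxEur ?block_mxEdl ?block_mxEdr !mxE
        ?d1E ?d12E ?hkk //.
    by rewrite (ipC Hip).
  have hu1 : forall i, u1 (lshift n i) = k (th i) by move=> i; rewrite /u1 sL.
  have hsum : \sum_a cvec 0 a *: u1 a = w.
    rewrite big_split_ord /= big1 ?add0r => [|i _]; last first.
      by rewrite /cvec row_mxEl mxE scale0r.
    by apply: eq_bigr => j _; rewrite /cvec row_mxEr /u1 sR.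
  exact: (final Hip K1 hu1 objE hsum hf').
move=> mu c mu0 c01 thetap obj K cvec sobj sfeas.
pose z (t : 'I_2) := if val t == 0%N then theta else thetap.
pose u2 (a : 'I_(Nk + 2 + n)) := match fintype.split a with
  | inl a1 => match fintype.split a1 with inl i => k (th i) | inr t => k (z t) end
  | inr j => vf j end.
have K2 : forall a c, K a c = ip (u2 a) (u2 c).
  move=> a b; rewrite /K /frakK' /= -[a]splitK -[b]splitK.
  case: (fintype.split a) => a'; case: (fintype.split b) => b' /=.
  - rewrite block_mxEul /u2 !sL -[a']splitK -[b']splitK.
    case: (fintype.split a') => a''; case: (fintype.split b') => b'' /=;
      rewrite ?sL ?sR ?block_mxEul ?block_mxEur ?block_mxEdl ?block_mxEdr.
    + by rewrite mxE hkk.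
    + rewrite row_mx2 !mxE hkk /z; case: ifP => _; by rewrite ksym.
    + by rewrite col_mx2 !mxE hkk /z; case: ifP.
    + by rewrite mxE hkk /z.
  - rewrite block_mxEur mxE -[a']splitK; case: (fintype.split a') => a'' /=;
      rewrite ?row_mxEl ?row_mxEr ?row_mx2 !mxE d1E /u2 ?sL ?sR /z //.
    by case: ifP.
  - rewrite block_mxEdl -[b']splitK; case: (fintype.split b') => b'' /=;
      rewrite ?row_mxEl ?row_mxEr ?row_mx2 !mxE d1E /u2 ?sL ?sR /z (ipC Hip) //.
    by case: ifP => _ //; rewrite d1E (ipC Hip).
  - by rewrite block_mxEdr mxE d12E /u2 !sR.
have hu2 : forall i, u2 (lshift n (lshift 2 i)) = k (th i) by move=> i; rewrite /u2 !sL.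
pose w2 := k thetap - k theta + (c * mu) *: w.
have objE2 : forall g, obj g = ip g w2.
  by move=> g; rewrite /obj objE /ev (ipDr Hip) (ipBr Hip) (ipZr Hip).
have hsum2 : \sum_a cvec 0 a *: u2 a = w2.
  rewrite big_split_ord /= big_split_ord /= big1 ?add0r => [|i _]; last first.
    by rewrite /cvec !row_mxEl mxE scale0r.
  rewrite /w2 /w scaler_sumr; congr (_ + _).
    rewrite !big_ord_recl big_ord0 addr0 /cvec !row_mxEl !row_mxEr !mxE /u2 !sL !sR /z /=.
    by rewrite scaleN1r scale1r addrC.
  apply: eq_bigr => j _; rewrite /cvec row_mxEr !mxE /u2 sR scalerA.
  by [].
exact: (final_max Hip K2 hu2 objE2 hsum2 hf').
Qed.
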